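(* Let $N\ge2$, $L^x,L^y>0$, and for each box $k\in\{1,\dots,N\}$ let constants $lb^x_k,lb^y_k>0$ be given. Let $F$ be the set of $(c,\ell,z,d)$, where $c=(c^s_k)$, $\ell=(\ell^s_k)$ for $k\in\{1,\dots,N\}$, $s\in\{x,y\}$, $z=(z^s_{p,q})\in\{0,1\}$ for all $s\in\{x,y\}$ and ordered pairs of distinct boxes $(p,q)$, and $d=(d^s_{i,j})$ with $d^s_{i,j}=d^s_{j,i}$ for unordered pairs, satisfying for every pair of distinct boxes $i,j$, every $s\in\{x,y\}$ and every $(p,q)\in\{(i,j),(j,i)\}$: \begin{align*} &\tfrac12\ell^s_p+lb^s_q z^s_{q,p}\le c^s_p\le L^s-\tfrac12\ell^s_p-lb^s_q z^s_{p,q},\qquad c^s_p+\tfrac12\ell^s_p\le c^s_q-\tfrac12\ell^s_q+L^s(1-z^s_{p,q}),\qquad \ell^s_p\ge lb^s_p,\\ &z^x_{i,j}+z^x_{j,i}+z^y_{i,j}+z^y_{j,i}\ge1,\qquad z^s_{i,j}+z^s_{j,i}\le1,\\ &c^s_p+\tfrac12\ell^s_p+L^s z^s_{p,q}\ge c^s_q-\tfrac12\ell^s_q+(lb^s_p+lb^s_q)(z^s_{i,j}+z^s_{j,i}),\\ &d^s_{i,j}\ge c^s_i-c^s_j,\qquad d^s_{i,j}\ge c^s_j-c^s_i. \end{align*} Fix distinct boxes $i,j$, an integer $m\ge1$, and distinct boxes $t^0=i,t^1,\dots,t^m,t^{m+1}=j$ (the path $P$). Fix $s\in\{x,y\}$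 and $\{p,q\}=\{i,j\}$. Define $\mathscr{M}^s_P(z)=1+\sum_{\xi=1}^{m+1}(z^s_{t^{\xi-1},t^\xi}-1)$ and $\gamma_P=\sum_{\xi=1}^m lb^s_{t^\xi}$. Then every point of $F$ satisfies \begin{align*} d^s_{i,j}&\ge\tfrac12(\ell^s_i+\ell^s_j)-L^s(1-z^s_{i,j}-z^s_{j,i})+\gamma_P\mathscr{M}^s_P(z),\\ d^s_{i,j}&\ge c^s_p-c^s_q+\ell^s_p+lb^s_q(z^s_{i,j}+z^s_{j,i})-L^s(1-z^s_{p,q})+\gamma_P\mathscr{M}^s_P(z),\\ d^s_{i,j}&\ge c^s_i-c^s_j+(lb^s_i+lb^s_j)z^s_{i,j}+\gamma_P\mathscr{M}^s_P(z),\\ 2d^s_{i,j}&\ge\ell^s_p+lb^s_q(z^s_{i,j}+z^s_{j,i})-L^s(1-z^s_{i,j}-z^s_{j,i})+2\gamma_P\mathscr{M}^s_P(z),\\ \tfrac12\ell^s_j+lb^s_i z^s_{i,j}+\gamma_P\mathscr{M}^s_P(z)&\le c^s_j,\\ c^s_i+\gamma_P\mathscr{M}^s_P(z)&\le L^s-\tfrac12\ell^s_i-lb^s_j z^s_{i,j},\\ c^s_i+\tfrac12\ell^s_i+\gamma_P\mathscr{M}^s_P(z)&\le c^s_j-\tfrac12\ell^s_j+L^s(1-z^s_{i,j}). \end{align*}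
   Context: Box $k$ has center $(c^x_k,c^y_k)$ and side lengths $(\ell^x_k,\ell^y_k)$. The set $F$ is the $N$-box refined unary formulation (the pairwise refined unary formulations for all pairs, sharing variables) augmented with the standard linearization variables $d^s_{i,j}$ of the Manhattan objective $|c^s_i-c^s_j|$. In the paper $lb^s_k=\beta_k/ub^s_k$ with $ub^s_k=\min\{\sqrt{\alpha_k\beta_k},L^s\}$. *)

(* Defs.v *)
(* Directions s in {x,y} are encoded as bool: true = x, false = y. *)
From mathcomp Require Import all_boot all_order all_algebra.
Set Implicit Arguments. Unset Strict Implicit. Unset Printing Implicit Defensive.
Import Order.TTheory GRing.Theory Num.Theory.
Local Open Scope ring_scope.

Definition inF (R : realFieldType) (N : nat) (L : bool -> R) (lb : bool -> 'I_N -> R)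
  (c l : bool -> 'I_N -> R) (z d : bool -> 'I_N -> 'I_N -> R) : Prop :=
  (forall s (p q : 'I_N), p != q -> z s p q = 0 \/ z s p q = 1) /\
  (forall s (i j : 'I_N), i != j -> d s i j = d s j i) /\
  (forall (i j : 'I_N), i != j ->
     z true i j + z true j i + z false i j + z false j i >= 1) /\
  (forall (i j : 'I_N), i != j -> forall s (p q : 'I_N),
     (p = i /\ q = j) \/ (p = j /\ q = i) ->
       (2^-1 * l s p + lb s q * z s q p <= c s p/\
           c s p <= L s - 2^-1 * l s p - lb s q * z s p q/\
           c s p + 2^-1 * l s p <= c s q - 2^-1 * l s q + L s * (1 - z s p q)/\
           l s p >= lb s p/\
           z s i j + z s j i <= 1/\
           c s p + 2^-1 * l s p + L s * z s p q >=
             c s q - 2^-1 * l s q + (lb s p + lb s q) * (z s i j + z s j i)/\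
           d s i j >= c s i - c s j/\
           d s i j >= c s j - c s i)).

Definition pathM (R : realFieldType) (N : nat) (z : bool -> 'I_N -> 'I_N -> R)
  (s : bool) (m : nat) (t : nat -> 'I_N) : R :=
  1 + \sum_(1 <= xi < m.+2) (z s (t xi.-1) (t xi) - 1).

Definition pathGamma (R : realFieldType) (N : nat) (lb : bool -> 'I_N -> R)
  (s : bool) (m : nat) (t : nat -> 'I_N) : R :=
  \sum_(1 <= xi < m.+1) lb s (t xi).

(* Main.v *)
Require Import Defs.
From mathcomp Require Import all_boot all_order all_algebra.
From mathcomp Require Import zify ring lra.
Import Order.TTheory GRing.Theory Num.Theory.
Local Open Scope ring_scope.

Theorem proposition7p3 (R : realFieldType) (N : nat) (HN : (2 <= N)%N)
  (L : bool -> R) (HL : forall s, 0 < L s)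
  (lb : bool -> 'I_N -> R) (Hlb : forall s k, 0 < lb s k)
  (i j : 'I_N) (Hij : i != j)
  (m : nat) (Hm : (1 <= m)%N) (t : nat -> 'I_N)
  (Ht0 : t 0%N = i) (Htm : t m.+1 = j)
  (Htinj : forall a b : nat, (a <= m.+1)%N -> (b <= m.+1)%N -> t a = t b -> a = b)
  (s : bool) (p q : 'I_N) (Hpq : (p = i /\ q = j) \/ (p = j /\ q = i))
  (c l : bool -> 'I_N -> R) (z d : bool -> 'I_N -> 'I_N -> R)
  (HF : inF L lb c l z d) :
  let M := pathM z s m t in
  let g := pathGamma lb s m t in
  (d s i j >= 2^-1 * (l s i + l s j) - L s * (1 - z s i j - z s j i) + g * M/\
      d s i j >= c s p - c s q + l s p + lb s q * (z s i j + z s j i)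
                 - L s * (1 - z s p q) + g * M/\
      d s i j >= c s i - c s j + (lb s i + lb s j) * z s i j + g * M/\
      2 * d s i j >= l s p + lb s q * (z s i j + z s j i)
                 - L s * (1 - z s i j - z s j i) + 2 * g * M/\
      2^-1 * l s j + lb s i * z s i j + g * M <= c s j/\
      c s i + g * M <= L s - 2^-1 * l s i - lb s j * z s i j/\
      c s i + 2^-1 * l s i + g * M <= c s j - 2^-1 * l s j + L s * (1 - z s i j)).
Proof.
move=> M g.
have [Hz [Hd [Hcov Hpair]]] := HF.
have step : forall a b : 'I_N, a != b -> z s a b = 1 ->
    c s a + 2^-1 * l s a <= c s b - 2^-1 * l s b.
  move=> a b ab zab.
  have [_ [_ [H _]]] := Hpair a b ab s a b (or_introl (conj erefl erefl)).
  by move: H; rewrite zab subrr mulr0 addr0.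
have lbl : forall k, lb s k <= l s k.
  move=> k.
  have [k' kk'] : exists k' : 'I_N, k' != k.
    have H0 : (0 < N)%N by lia.
    case: (eqVneq k (Ordinal H0)) => [->|ne].
      by exists (Ordinal HN).
    by exists (Ordinal H0); rewrite eq_sym.
  have kk'' : k != k' by rewrite eq_sym.
  by have [_ [_ [_ [H _]]]] := Hpair k k' kk'' s k k' (or_introl (conj erefl erefl)).
have dist : forall xi, (1 <= xi <= m.+1)%N -> t xi.-1 != t xi.
  move=> xi /andP [h1 h2]; apply/eqP => H.
  have := Htinj _ _ _ _ H; lia.
have zbin : forall xi, (1 <= xi <= m.+1)%N ->
    z s (t xi.-1) (t xi) = 0 \/ z s (t xi.-1) (t xi) = 1.
  by move=> xi hx; apply: Hz; apply: dist.
have dich : forall n, (n <= m.+1)%N ->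
   (\sum_(1 <= xi < n.+1) (z s (t xi.-1) (t xi) - 1) <= -1) \/
   (\sum_(1 <= xi < n.+1) (z s (t xi.-1) (t xi) - 1) = 0 /\
    forall xi, (1 <= xi <= n)%N -> z s (t xi.-1) (t xi) = 1).
  elim=> [|n IH] hn.
    right; split; first by rewrite big_geq.
    by move=> xi; lia.
  rewrite big_nat_recr //=.
  have [IHl|[IHe IHr]] := IH (ltnW hn).
    left; have [->|->] := zbin n.+1 (ltac:(lia)); lra.
  have [e|e] := zbin n.+1 (ltac:(lia)); rewrite e IHe.
    left; lra.
  right; split; first lra.
  move=> xi hx; case: (ltnP xi n.+1) => h.
    by apply: IHr; lia.
  have -> : xi = n.+1 by lia.
  exact: e.
have g0 : 0 <= g.
  by rewrite /g /pathGamma; apply: sumr_ge0 => k _; apply: ltW.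
have lpos : forall k, 0 < l s k.
  by move=> k; apply: lt_le_trans (Hlb s k) (lbl k).
have key : (g * M <= 0) \/ (g * M = g /\ c s i + 2^-1 * l s i + g <= c s j - 2^-1 * l s j).
  have [Sl|[Se Sr]] := dich m.+1 (leqnn _).
    left; apply: mulr_ge0_le0 => //; rewrite /M /pathM; lra.
  right; split; first by rewrite /M /pathM Se addr0 mulr1.
  have ch : forall k, (1 <= k <= m.+1)%N ->
      c s (t 0%N) + 2^-1 * l s (t 0%N) + \sum_(1 <= xi < k) l s (t xi)
        <= c s (t k) - 2^-1 * l s (t k).
    elim=> [|k IHk] hk; first lia.
    case: (eqVneq k 0%N) => [->|k0].
      rewrite big_geq //= addr0; apply: step; [exact: (dist 1%N) | exact: (Sr 1%N)].
    rewrite big_nat_recr /=; last lia.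
    have h1 := IHk (ltac:(lia)).
    have h2 := step (t k) (t k.+1) (dist k.+1 (ltac:(lia))) (Sr k.+1 (ltac:(lia))).
    lra.
  have := ch m.+1 (ltac:(lia)); rewrite Ht0 Htm => hc.
  have hs : g <= \sum_(1 <= xi < m.+1) l s (t xi).
    by rewrite /g /pathGamma; apply: ler_sum => k _; apply: lbl.
  lra.
have Hji : j != i by rewrite eq_sym.
have [A1 [A2 [A3 [A4 [A5 [A6 [A7 A8]]]]]]] :=
  Hpair i j Hij s i j (or_introl (conj erefl erefl)).
have [B1 [B2 [B3 [B4 [B5 [B6 [B7 B8]]]]]]] :=
  Hpair i j Hij s j i (or_intror (conj erefl erefl)).
have li := lpos i; have lj := lpos j; have lbi := lbl i; have lbj := lbl j.
have lbi0 := Hlb s i; have lbj0 := Hlb s j.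
have za := Hz s i j Hij; have zb := Hz s j i Hji.
rewrite -mulrA.
clear dich zbin dist step lbl lpos Hpair Hcov Hd Hz Htinj HF.
move: key; generalize (g * M) => X key.
case: Hpq => [[-> ->]|[-> ->]].
all: case: za => a; case: zb => b.
all: rewrite a b in A1 A2 A3 A4 A5 A6 A7 A8 B1 B2 B3 B4 B5 B6 B7 B8 *.
all: case: key => [key|[key1 key2]].
all: split; [lra|split; [lra|split; [lra|split; [lra|split;[lra|split;lra]]]]].
Qed.
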